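(* Let $M\subset \bigoplus_{i=1}^r A[-\delta_i]$ be a graded right $A$-submodule, and let $\delta'_i$ be integers with $\delta_i\ge\delta'_i\ge 0$. Put $\bar M=H(M)\subset\bigoplus_{i=1}^r \bar A[-\delta'_i]$ and $\bar M' = \bar M\cap \bigoplus_{i} t^{\delta_i-\delta'_i}A[-\delta_i]$, where $\bigoplus_i t^{\delta_i-\delta'_i}A[-\delta_i]$ denotes the set of elements $\sum_i \bar e_i\, t^{\delta_i-\delta'_i} a_i$ with $a_i\in A$. Then $\eta(M)=\bar M'$. In particular $\dim_{\mathbb K} M_d=\dim_{\mathbb K}\bar M'_d$ for all $d\ge 0$.
   Context: Let $\mathbb K$ be a field and $F=\mathbb K\langle x_1,\dots,x_n\rangle$ the free associative algebra with the standard grading ($\deg x_i=1$). Let $I\subset F$ be a graded two-sided ideal and $A=F/I$. For an integer $\delta\ge0$, $A[-\delta]$ denotes $A$ with shifted grading $A[-\delta]_d=A_{d-\delta}$ (and $0$ for $d<\delta$). $\bigoplus_{i=1}^r A[-\delta_i]$ is the graded free right $A$-module with canonical basis $e_1,\dots,e_r$, $\deg e_i=\delta_i$. A right submodule $M$ is graded if it is the sum of its homogeneous components $M_d$. Let $t$ be a new variable, $\bar F=\mathbb K\langle x_1,\dots,x_n,t\rangle$ with standard grading, $\bar I$ the two-sided ideal of $\bar F$ generated by $I$, and $\bar A=\bar F/\bar I$; $A$ embeds canonically in $\bar A$. For integers $\delta_i\ge\delta'_i\ge0$, $\bigoplus_i\bar A[-\delta'_i]$ is the graded free right $\bar A$-module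 with canonical basis $\bar e_i$, $\deg\bar e_i=\delta'_i$, and $\eta:\bigoplus_i A[-\delta_i]\to\bigoplus_i\bar A[-\delta'_i]$ is the injective graded right $A$-module homomorphism $e_i\mapsto \bar e_i t^{\delta_i-\delta'_i}$. For a graded right $A$-submodule $M$, the component homogenization $H(M)$ is the right $\bar A$-submodule of $\bigoplus_i\bar A[-\delta'_i]$ generated by $\eta(M)$. *)

(* Defs.v *)
From HB Require Import structures.
From mathcomp Require Import all_boot all_order all_algebra.
Set Implicit Arguments. Unset Strict Implicit. Unset Printing Implicit Defensive.
Import GRing.Theory.
Local Open Scope ring_scope.

(* Noncommutative formal series over an alphabet X with coefficients in K:
   functions from words (seq X) to K.  The free associative algebra
   K<X> is the set of series of bounded degree (= finite support, X finite). *)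
Definition ser (K : fieldType) (X : Type) := seq X -> K.

Definition ser_zero (K : fieldType) (X : Type) : ser K X := fun _ => 0.
Definition ser_add (K : fieldType) (X : Type) (f g : ser K X) : ser K X :=
  fun w => f w + g w.
Definition ser_sub (K : fieldType) (X : Type) (f g : ser K X) : ser K X :=
  fun w => f w - g w.
Definition ser_mul (K : fieldType) (X : Type) (f g : ser K X) : ser K X :=
  fun w => \sum_(i < (size w).+1) f (take i w) * g (drop i w).

Definition is_poly (K : fieldType) (X : Type) (f : ser K X) : Prop :=
  exists N : nat, forall w, (N <= size w)%N -> f w = 0.

Definition hcomp (K : fieldType) (X : Type) (d : nat) (f : ser K X) : ser K X :=
  fun w => if size w == d then f w else 0.

Definition graded_ideal (K : fieldType) (X : Type) (I : ser K X -> Prop) : Prop :=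
  [/\ forall f, I f -> is_poly f,
      I (@ser_zero K X),
      forall f g, I f -> I g -> I (ser_add f g),
      forall f u, I f -> is_poly u -> I (ser_mul u f) /\ I (ser_mul f u)
    & forall f d, I f -> I (hcomp d f)].

(* Tuples (elements of the free module on e_1..e_r) are 'I_r -> ser K X.
   Equality modulo an ideal J in every coordinate. *)
Definition tequiv (K : fieldType) (X : Type) (r : nat) (J : ser K X -> Prop)
  (m m' : 'I_r -> ser K X) : Prop := forall i, J (ser_sub (m i) (m' i)).

Definition tcomp (K : fieldType) (X : Type) (r : nat) (deg : 'I_r -> nat) (d : nat)
  (m : 'I_r -> ser K X) : 'I_r -> ser K X :=
  fun i => if (deg i <= d)%N then hcomp (d - deg i) (m i) else @ser_zero K X.

Definition thom (K : fieldType) (X : Type) (r : nat) (deg : 'I_r -> nat) (d : nat)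
  (m : 'I_r -> ser K X) : Prop :=
  forall i w, (size w + deg i != d)%N -> m i w = 0.

(* A graded right A-submodule M of (+)_i A[-deg i], A = K<X>/I, encoded by its
   preimage Mt in (+)_i K<X>[-deg i] (which is saturated w.r.t. I). *)
Definition graded_submodule (K : fieldType) (X : Type) (I : ser K X -> Prop)
  (r : nat) (deg : 'I_r -> nat) (Mt : ('I_r -> ser K X) -> Prop) : Prop :=
  [/\ (forall m, Mt m -> forall i, is_poly (m i)) /\
      Mt (fun _ => @ser_zero K X),
      forall m m', Mt m -> Mt m' -> Mt (fun i => ser_add (m i) (m' i)),
      forall m u, Mt m -> is_poly u -> Mt (fun i => ser_mul (m i) u),
      forall m m', Mt m -> (forall i, is_poly (m' i)) -> tequiv I m m' -> Mt m'
    & forall m d, Mt m -> Mt (tcomp deg d m)].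

(* The extended alphabet: Some x = x, None = the new variable t. *)
Definition emb (K : fieldType) (X : Type) (f : ser K X) : ser K (option X) :=
  fun w => if size (pmap id w) == size w then f (pmap id w) else 0.

Definition tpow (K : fieldType) (X : Type) (k : nat) : ser K (option X) :=
  fun w => if (size w == k) && all (fun o : option X => ~~ isSome o) w then 1 else 0.

Definition gen_ideal (K : fieldType) (X : Type) (I : ser K X -> Prop)
  (g : ser K (option X)) : Prop :=
  exists (N : nat) (u : 'I_N -> ser K (option X)) (f : 'I_N -> ser K X)
         (v : 'I_N -> ser K (option X)),
    (forall j, [/\ is_poly (u j), I (f j) & is_poly (v j)]) /\
    forall w, g w = \sum_(j < N) ser_mul (ser_mul (u j) (emb (f j))) (v j) w.

(* eta : e_i |-> bar e_i t^(k i), with k i = delta i - delta' i *)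
Definition eta (K : fieldType) (X : Type) (r : nat) (k : 'I_r -> nat)
  (m : 'I_r -> ser K X) : 'I_r -> ser K (option X) :=
  fun i => ser_mul (@tpow K X (k i)) (emb (m i)).

(* preimage of eta(M) in (+)_i K<X,t> *)
Definition etaM (K : fieldType) (X : Type) (I : ser K X -> Prop) (r : nat)
  (k : 'I_r -> nat) (Mt : ('I_r -> ser K X) -> Prop)
  (g : 'I_r -> ser K (option X)) : Prop :=
  (forall i, is_poly (g i)) /\
  exists m, Mt m /\ tequiv (gen_ideal I) g (eta k m).

(* preimage of H(M): right barA-submodule generated by eta(M) *)
Definition Hhom (K : fieldType) (X : Type) (I : ser K X -> Prop) (r : nat)
  (k : 'I_r -> nat) (Mt : ('I_r -> ser K X) -> Prop)
  (g : 'I_r -> ser K (option X)) : Prop :=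
  (forall i, is_poly (g i)) /\
  exists (N : nat) (ms : 'I_N -> 'I_r -> ser K X) (us : 'I_N -> ser K (option X)),
    (forall j, Mt (ms j) /\ is_poly (us j)) /\
    tequiv (gen_ideal I) g
      (fun i w => \sum_(j < N) ser_mul (eta k (ms j) i) (us j) w).

(* preimage of barM' = H(M) /\ (+)_i t^(k i) A[-delta i] *)
Definition Mbar' (K : fieldType) (X : Type) (I : ser K X -> Prop) (r : nat)
  (k : 'I_r -> nat) (Mt : ('I_r -> ser K X) -> Prop)
  (g : 'I_r -> ser K (option X)) : Prop :=
  Hhom I k Mt g /\
  exists a : 'I_r -> ser K X,
    (forall i, is_poly (a i)) /\ tequiv (gen_ideal I) g (eta k a).

(* There are N elements of the degree-d component of the submodule (given by its
   preimage P) that are K-linearly independent modulo J.  dim_K P_d is the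
   supremum of such N. *)
Definition indep_family (K : fieldType) (Y : Type) (J : ser K Y -> Prop) (r : nat)
  (deg : 'I_r -> nat) (P : ('I_r -> ser K Y) -> Prop) (d N : nat) : Prop :=
  exists ms : 'I_N -> 'I_r -> ser K Y,
    (forall j, P (ms j) /\ thom deg d (ms j)) /\
    forall c : 'I_N -> K,
      (forall i, J (fun w => \sum_(j < N) c j * ms j i w)) -> forall j, c j = 0.

(* Main.v *)
Require Import Defs.
From HB Require Import structures.
From mathcomp Require Import all_boot all_order all_algebra.
From mathcomp Require Import zify ring.
From Stdlib Require Import ClassicalEpsilon FunctionalExtensionality.
Import GRing.Theory.
Local Open Scope ring_scope.
Set Implicit Arguments. Unset Strict Implicit. Unset Printing Implicit Defensive.

Section Ser.
Variable K : fieldType.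

Definition cst (T : Type) (c : K) : ser K T := fun w => if w is [::] then c else 0.
Definition bnded {T : Type} (g : ser K T) (n : nat) := forall w, (n <= size w)%N -> g w = 0.

Lemma bnded_mono T (g : ser K T) n m : (n <= m)%N -> bnded g n -> bnded g m.
Proof. by move=> nm H w hw; apply: H; apply: leq_trans hw. Qed.

Lemma fin_bound N (P : 'I_N -> nat -> Prop) :
  (forall j n m, (n <= m)%N -> P j n -> P j m) -> (forall j, exists n, P j n) ->
  exists n, forall j, P j n.
Proof.
elim: N P => [|N IH] P Pm HP; first by exists 0%N => -[].
have [n1 H1] := IH (fun j => P (lift ord0 j)) (fun j => Pm _) (fun j => HP _).
have [n0 H0] := HP ord0.
exists (n0 + n1)%N => j; case: (unliftP ord0 j) => [j'|] ->.
  by apply: Pm (H1 j'); apply: leq_addl.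
by apply: Pm H0; apply: leq_addr.
Qed.

Lemma mul_cst T c (f : ser K T) : ser_mul (@cst T c) f = fun w => c * f w.
Proof.
apply: functional_extensionality => w; rewrite /ser_mul big_ord_recl /= take0 drop0.
rewrite big1 ?addr0 // => i _; case: w i => [|x w] i //=; first by case: i.
by rewrite mul0r.
Qed.

Lemma mul_1l T (f : ser K T) : ser_mul (@cst T 1) f = f.
Proof. by rewrite mul_cst; apply: functional_extensionality => w; rewrite mul1r. Qed.

Lemma mul_1r T (f : ser K T) : ser_mul f (@cst T 1) = f.
Proof.
apply: functional_extensionality => w; rewrite /ser_mul big_ord_recr /= take_size drop_size /=.
rewrite mulr1 big1 ?add0r // => i _.
case E: (drop i w) => [|y s]; last by rewrite mulr0.
have := congr1 size E; rewrite size_drop /=; have := ltn_ord i; lia.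
Qed.

Lemma mul_suml T N (F : 'I_N -> ser K T) g :
  ser_mul (fun w => \sum_(j < N) F j w) g = fun w => \sum_(j < N) ser_mul (F j) g w.
Proof.
apply: functional_extensionality => w; rewrite /ser_mul.
under eq_bigr do rewrite mulr_suml. exact: exchange_big.
Qed.

Lemma mul_sumr T N (F : 'I_N -> ser K T) g :
  ser_mul g (fun w => \sum_(j < N) F j w) = fun w => \sum_(j < N) ser_mul g (F j) w.
Proof.
apply: functional_extensionality => w; rewrite /ser_mul.
under eq_bigr do rewrite mulr_sumr. exact: exchange_big.
Qed.

Lemma mul_scalel T c (f g : ser K T) :
  ser_mul (fun w => c * f w) g = fun w => c * ser_mul f g w.
Proof.
apply: functional_extensionality => w; rewrite /ser_mul mulr_sumr.
by apply: eq_bigr => i _; rewrite mulrA.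
Qed.

Lemma mul_scaler T c (f g : ser K T) :
  ser_mul f (fun w => c * g w) = fun w => c * ser_mul f g w.
Proof.
apply: functional_extensionality => w; rewrite /ser_mul mulr_sumr.
by apply: eq_bigr => i _; rewrite mulrCA.
Qed.

Lemma polyP T (g : ser K T) : is_poly g <-> exists n, bnded g n.
Proof. by []. Qed.

Lemma poly_mul T (u v : ser K T) : is_poly u -> is_poly v -> is_poly (ser_mul u v).
Proof.
move=> [Nu Hu] [Nv Hv]; exists (Nu + Nv)%N => w Hw; rewrite /ser_mul big1 // => i _.
have hi := ltn_ord i.
case: (leqP Nu i) => h.
  by rewrite Hu ?mul0r // size_takel //; lia.
by rewrite Hv ?mulr0 // size_drop; lia.
Qed.

Lemma poly_add T (u v : ser K T) : is_poly u -> is_poly v -> is_poly (ser_add u v).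
Proof.
move=> [Nu Hu] [Nv Hv]; exists (Nu + Nv)%N => w Hw.
by rewrite /ser_add Hu ?Hv ?addr0 //; lia.
Qed.

Lemma poly_sub T (u v : ser K T) : is_poly u -> is_poly v -> is_poly (ser_sub u v).
Proof.
move=> [Nu Hu] [Nv Hv]; exists (Nu + Nv)%N => w Hw.
by rewrite /ser_sub Hu ?Hv ?subrr //; lia.
Qed.

Lemma poly_ext T (u v : ser K T) : (forall w, u w = v w) -> is_poly u -> is_poly v.
Proof. by move=> E [N H]; exists N => w hw; rewrite -E H. Qed.

Lemma poly_lin T N (c : 'I_N -> K) (F : 'I_N -> ser K T) :
  (forall j, is_poly (F j)) -> is_poly (fun w => \sum_(j < N) c j * F j w).
Proof.
move=> HF; have [n Hn] := @fin_bound N (fun j n => bnded (F j) n)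
   (fun j n m nm => @bnded_mono T (F j) n m nm) HF.
by exists n => w hw; rewrite big1 // => j _; rewrite Hn ?mulr0.
Qed.

Lemma poly_sum T N (F : 'I_N -> ser K T) :
  (forall j, is_poly (F j)) -> is_poly (fun w => \sum_(j < N) F j w).
Proof.
move=> HF; apply: poly_ext (poly_lin (fun _ => 1) HF) => w.
by apply: eq_bigr => j _; rewrite mul1r.
Qed.

Lemma poly_cst T c : is_poly (@cst T c).
Proof. by exists 1%N => -[|x w]. Qed.

Lemma poly_zero T : is_poly (@ser_zero K T).
Proof. by exists 0%N. Qed.

Lemma poly_hcomp T d (f : ser K T) : is_poly (hcomp d f).
Proof. by exists d.+1 => w hw; rewrite /hcomp; case: eqP => // e; lia. Qed.

Lemma poly_emb (X : Type) (f : ser K X) : is_poly f -> is_poly (emb f).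
Proof.
move=> [N H]; exists N => w hw; rewrite /emb; case: eqP => // e.
by apply: H; rewrite e.
Qed.

Lemma poly_tpow (X : Type) k : is_poly (@tpow K X k).
Proof. exists k.+1 => w hw; rewrite /tpow; case: eqP => //= e; lia. Qed.


Lemma sum_single (T : eqType) (s : seq T) x0 (F : T -> K) :
  uniq s -> (forall x, x != x0 -> F x = 0) ->
  \sum_(x <- s) F x = if x0 \in s then F x0 else 0.
Proof.
move=> us F0; case: ifP => xs.
  rewrite (bigD1_seq x0) //= big1 ?addr0 // => x; exact: F0.
rewrite big1_seq // => x /andP[_ xs']; apply: F0; apply/eqP => e; by rewrite -e xs' in xs.
Qed.

Lemma ord_single m j0 (F : nat -> K) :
  (forall j, (j < m)%N -> j != j0 -> F j = 0) ->
  \sum_(j < m) F j = if (j0 < m)%N then F j0 else 0.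
Proof.
move=> F0; case: ifP => h.
  rewrite (bigD1 (Ordinal h)) //= [X in _ + X]big1 ?addr0 // => j nj.
  apply: F0 => //; apply: contra nj => /eqP e; apply/eqP; exact: val_inj.
by rewrite big1 // => j _; apply: F0 => //; apply/eqP => e; rewrite -e ltn_ord in h.
Qed.

Lemma split_count (T : eqType) (a b x : seq T) :
  \sum_(j < (size x).+1) (if (a == take j x) && (b == drop j x) then 1 else 0 : K)
  = if a ++ b == x then 1 else 0.
Proof.
rewrite (@ord_single _ (size a) (fun j : nat => if (a == take j x) && (b == drop j x) then 1 else 0)); last first.
  move=> j hj ja; case: eqP => // ea.
  by move: ja; rewrite ea size_takel // eqxx.
case: ifP => hs.
  case: (eqVneq (a ++ b) x) => [<-|nx].
    by rewrite take_size_cat // drop_size_cat // !eqxx.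
  case: eqP => // ea; case: eqP => // eb; move/eqP: nx; case; by rewrite ea eb cat_take_drop.
case: eqP => // ex; move: hs; rewrite -ex size_cat; lia.
Qed.

Lemma sum_subseq (T : eqType) (s t : seq T) (F : T -> K) :
  uniq s -> uniq t -> {subset t <= s} ->
  (forall x, x \in s -> x \notin t -> F x = 0) ->
  \sum_(x <- s) F x = \sum_(x <- t) F x.
Proof.
move=> us ut ts F0; rewrite (bigID (mem t)) /= [X in _ + X]big1_seq ?addr0; last first.
  by move=> x /andP[nt xs]; apply: F0.
rewrite -big_filter; apply: perm_big; apply: uniq_perm; first exact: filter_uniq.
  exact: ut.
by move=> x; rewrite mem_filter; case xt: (x \in t) => //=; apply: ts.
Qed.

Section Psi.
Variable X : finType.
Local Notation Y := (option X).

Fixpoint allw (B : nat) : seq (seq Y) :=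
  if B is B'.+1 then [::] :: [seq o :: x | o <- enum {: option X}, x <- allw B'] else [::].

Lemma mem_allw B x : (x \in allw B) = (size x < B)%N.
Proof.
elim: B x => [|B IH] [|o x] //=; rewrite in_cons /=.
apply/allpairsP/idP => [[[o' x']] /= [_ hx [eo ex]]|hx]; first by rewrite ex ltnS -IH.
by exists (o, x); rewrite /= mem_enum IH -ltnS.
Qed.

Lemma uniq_allw B : uniq (allw B).
Proof.
elim: B => [|B IH] //=; apply/andP; split.
  by apply/allpairsP => -[[o x]] /= [_ _].
apply: allpairs_uniq => //; first exact: enum_uniq.
by move=> [o x] [o' x'] _ _ /= [-> ->].
Qed.

Definition psiB B (g : ser K Y) : ser K X :=
  fun w => \sum_(x <- allw B) (if pmap id x == w then g x else 0).

Lemma psiB_bnded B g : bnded (psiB B g) B.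
Proof.
move=> w hw; rewrite /psiB big1_seq // => x /andP[_]; rewrite mem_allw => hx.
case: eqP => // e; have : (size w <= size x)%N by rewrite -e size_pmap count_size.
lia.
Qed.

Lemma psiB_stable B N g : bnded g N -> (N <= B)%N -> psiB B g = psiB N g.
Proof.
move=> Hg NB; apply: functional_extensionality => w; rewrite /psiB.
apply: sum_subseq; [exact: uniq_allw | exact: uniq_allw | | ].
  by move=> x; rewrite !mem_allw => h; apply: leq_trans NB.
by move=> x _; rewrite mem_allw -leqNgt => h; rewrite Hg // if_same.
Qed.

Lemma psiB_eq N1 N2 g : bnded g N1 -> bnded g N2 -> psiB N1 g = psiB N2 g.
Proof.
move=> H1 H2; rewrite -(psiB_stable H1 (leq_addr N2 N1)) (psiB_stable H2) //.
exact: leq_addl.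
Qed.

Definition bnd (g : ser K Y) : nat :=
  match excluded_middle_informative (is_poly g) with
  | left H => proj1_sig (constructive_indefinite_description _ H)
  | right _ => 0%N end.

Lemma bndP g : is_poly g -> bnded g (bnd g).
Proof.
rewrite /bnd; case: excluded_middle_informative => // H _.
by case: constructive_indefinite_description.
Qed.

Definition psi g := psiB (bnd g) g.

Lemma psiE g N : bnded g N -> psi g = psiB N g.
Proof. by move=> H; apply: psiB_eq => //; apply: bndP; exists N. Qed.

Lemma poly_psi g : is_poly (psi g).
Proof. by exists (bnd g); apply: psiB_bnded. Qed.


Lemma bnded_mul T (u v : ser K T) Nu Nv :
  bnded u Nu -> bnded v Nv -> bnded (ser_mul u v) (Nu + Nv).
Proof.
move=> Hu Hv w Hw; rewrite /ser_mul big1 // => i _.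
have hi := ltn_ord i.
case: (leqP Nu i) => h.
  by rewrite Hu ?mul0r // size_takel //; lia.
by rewrite Hv ?mulr0 // size_drop; lia.
Qed.

Lemma psi_lin N (c : 'I_N -> K) (F : 'I_N -> ser K Y) :
  (forall j, is_poly (F j)) ->
  psi (fun w => \sum_(j < N) c j * F j w) = fun w => \sum_(j < N) c j * psi (F j) w.
Proof.
move=> HF; have [n Hn] := @fin_bound N (fun j n => bnded (F j) n)
   (fun j n m nm => @bnded_mono _ (F j) n m nm) HF.
rewrite (@psiE _ n); last by move=> w hw; rewrite big1 // => j _; rewrite Hn ?mulr0.
apply: functional_extensionality => w.
under [RHS]eq_bigr do rewrite (psiE (Hn _)).
rewrite /psiB.
transitivity (\sum_(x <- allw n) \sum_(j < N) c j * (if pmap id x == w then F j x else 0)).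
  apply: eq_bigr => x _; case: ifP => _ //; by rewrite big1 // => j _; rewrite mulr0.
by rewrite exchange_big; apply: eq_bigr => j _; rewrite mulr_sumr.
Qed.

Lemma bnded_sub T (u v : ser K T) Nu Nv :
  bnded u Nu -> bnded v Nv -> bnded (ser_sub u v) (Nu + Nv).
Proof. by move=> Hu Hv w Hw; rewrite /ser_sub Hu ?Hv ?subrr //; lia. Qed.

Lemma psi_sub f g : is_poly f -> is_poly g -> psi (ser_sub f g) = ser_sub (psi f) (psi g).
Proof.
move=> [nf Hf] [ng Hg].
have Hf' := bnded_mono (leq_addr ng nf) Hf.
have Hg' := bnded_mono (leq_addl nf ng) Hg.
rewrite (psiE (bnded_sub Hf Hg)) (psiE Hf') (psiE Hg').
apply: functional_extensionality => w; rewrite /psiB /ser_sub -sumrB.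
by apply: eq_bigr => x _; case: ifP; rewrite ?subr0.
Qed.

Lemma pmap_mapSome (w : seq X) : pmap id (map Some w) = w.
Proof. by elim: w => //= a w ->. Qed.

Lemma emb_shape (x : seq Y) : size (pmap id x) == size x -> x = map Some (pmap id x).
Proof.
elim: x => //= -[a|] x IH /=.
  by move=> /IH {1}->.
move=> /eqP h; have : (size (pmap id x) <= size x)%N by rewrite size_pmap count_size.
by rewrite h ltnn.
Qed.

Lemma bnded_emb (f : ser K X) N : bnded f N -> bnded (emb f) N.
Proof. move=> H w hw; rewrite /emb; case: eqP => // e; apply: H; by rewrite e. Qed.

Lemma psi_emb f : is_poly f -> psi (emb f) = f.
Proof.
move=> [N HN]; rewrite (psiE (bnded_emb HN)); apply: functional_extensionality => w.
rewrite /psiB (@sum_single _ _ (map Some w)); first last.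
- move=> x nx; case: eqP => // e; rewrite /emb; case: eqP => // /eqP hs.
  by move: nx; rewrite {1}(emb_shape hs) e eqxx.
- exact: uniq_allw.
rewrite mem_allw size_map; case: ltnP => h.
  by rewrite pmap_mapSome eqxx /emb pmap_mapSome size_map eqxx.
by rewrite HN.
Qed.

Lemma none_shape (x : seq Y) : all (fun o : Y => ~~ isSome o) x -> x = nseq (size x) None.
Proof. by elim: x => //= -[a|] x IH //= /IH {1}->. Qed.

Lemma psi_tpow k : psi (@tpow K X k) = @cst _ 1.
Proof.
have Hb : bnded (@tpow K X k) k.+1 by move=> w hw; rewrite /tpow; case: eqP => //= e; lia.
rewrite (psiE Hb); apply: functional_extensionality => w.
rewrite /psiB (@sum_single _ _ (nseq k None)); first last.
- move=> x nx; case: eqP => // e; rewrite /tpow; case: ifP => // /andP[/eqP sk al].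
  by move: nx; rewrite {1}(none_shape al) sk eqxx.
- exact: uniq_allw.
rewrite mem_allw size_nseq ltnSn.
have -> : pmap id (nseq k (@None X)) = [::] by elim: k {Hb}.
rewrite /tpow size_nseq eqxx all_nseq /= orbT.
by case: w.
Qed.

Lemma cond_mul (c : bool) (G : K) : (if c then G else 0) = G * (if c then 1 else 0).
Proof. by case: c; rewrite ?mulr1 ?mulr0. Qed.


Lemma psi_mul u v : is_poly u -> is_poly v -> psi (ser_mul u v) = ser_mul (psi u) (psi v).
Proof.
move=> [Nu Hu] [Nv Hv]; set B := (Nu + Nv)%N.
have Hu' := bnded_mono (leq_addr Nv Nu) Hu.
have Hv' := bnded_mono (leq_addl Nu Nv) Hv.
rewrite (psiE (bnded_mul Hu Hv)) (psiE Hu') (psiE Hv').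
apply: functional_extensionality => w.
set W := allw B; have uW : uniq W by apply: uniq_allw.
pose G a b := u a * v b.
have L1 : forall x : seq Y, (size x < B)%N ->
   \sum_(j < (size x).+1) u (take j x) * v (drop j x) =
   \sum_(a <- W) \sum_(b <- W) (if a ++ b == x then G a b else 0).
  move=> x hx.
  transitivity (\sum_(j < (size x).+1) \sum_(a <- W) \sum_(b <- W)
      (if (a == take j x) && (b == drop j x) then G a b else 0)).
    apply: eq_bigr => j _.
    rewrite (@sum_single _ _ (take j x)) //; last first.
      by move=> a na; rewrite big1 // => b _; rewrite (negbTE na).
    rewrite mem_allw size_take_min; have -> : (minn j (size x) < B)%N by lia.
    rewrite eqxx /= (@sum_single _ _ (drop j x)) //; last first.
      by move=> b nb; rewrite (negbTE nb).
    by rewrite mem_allw size_drop eqxx; have -> : (size x - j < B)%N by lia.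
  rewrite exchange_big; apply: eq_bigr => a _; rewrite exchange_big; apply: eq_bigr => b _.
  rewrite [RHS]cond_mul -(split_count a b x) mulr_sumr; apply: eq_bigr => j _.
  by rewrite cond_mul.
transitivity (\sum_(a <- W) \sum_(b <- W) (if pmap id a ++ pmap id b == w then G a b else 0)).
  rewrite /psiB /ser_mul.
  transitivity (\sum_(x <- W) \sum_(a <- W) \sum_(b <- W)
      (if (pmap id x == w) && (a ++ b == x) then G a b else 0)).
    rewrite big_seq_cond [RHS]big_seq_cond; apply: eq_bigr => x /andP[xW _].
    rewrite mem_allw in xW; rewrite (L1 x xW); case: ifP => _.
      by apply: eq_bigr => a _; apply: eq_bigr => b _.
    by rewrite big1 // => a _; rewrite big1.
  rewrite exchange_big; apply: eq_bigr => a _; rewrite exchange_big; apply: eq_bigr => b _.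
  rewrite (@sum_single _ _ (a ++ b)) //; last first.
    by move=> x nx; rewrite [a ++ b == x]eq_sym (negbTE nx) andbF.
  rewrite eqxx andbT pmap_cat mem_allw; case: ifP => // h.
  rewrite /G /B size_cat in h *; case: (leqP Nu (size a)) => ha.
    by rewrite Hu ?mul0r ?if_same.
  rewrite Hv ?mulr0 ?if_same //; move: h ha; clear; set sa := size a; set sb := size b; lia.
rewrite /ser_mul.
transitivity (\sum_(i < (size w).+1) \sum_(a <- W) \sum_(b <- W)
   (if (pmap id a == take i w) && (pmap id b == drop i w) then G a b else 0)); last first.
  apply: eq_bigr => i _; rewrite /psiB mulr_suml; apply: eq_bigr => a _.
  rewrite mulr_sumr; apply: eq_bigr => b _.
  by case: (pmap id a == take i w); case: (pmap id b == drop i w); rewrite ?mulr0 ?mul0r.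
rewrite [RHS]exchange_big; apply: eq_bigr => a _; rewrite [RHS]exchange_big; apply: eq_bigr => b _.
rewrite cond_mul -(split_count (pmap id a) (pmap id b) w) mulr_sumr; apply: eq_bigr => j _.
by rewrite [RHS]cond_mul.
Qed.

Lemma psi_sum N (F : 'I_N -> ser K Y) :
  (forall j, is_poly (F j)) ->
  psi (fun w => \sum_(j < N) F j w) = fun w => \sum_(j < N) psi (F j) w.
Proof.
move=> HF; have := psi_lin (fun _ => 1) HF.
have -> : (fun w => \sum_(j < N) 1 * F j w) = (fun w => \sum_(j < N) F j w).
  by apply: functional_extensionality => w; apply: eq_bigr => j _; rewrite mul1r.
move=> ->; apply: functional_extensionality => w; apply: eq_bigr => j _; by rewrite mul1r.
Qed.
End Psi.

Lemma poly_scale T c (f : ser K T) : is_poly f -> is_poly (fun w => c * f w).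
Proof. by move=> [N H]; exists N => w hw; rewrite H ?mulr0. Qed.

Lemma tpow_mul (X : Type) k (h : ser K (option X)) w :
  ser_mul (tpow K k) h w =
  if (k <= size w)%N && all (fun o : option X => ~~ isSome o) (take k w) then h (drop k w) else 0.
Proof.
rewrite /ser_mul (@ord_single _ k (fun j => tpow K k (take j w) * h (drop j w))); last first.
  move=> j hj jk; rewrite /tpow size_takel; last by rewrite -ltnS.
  by rewrite (negbTE jk) mul0r.
rewrite ltnS; case: leqP => //= hk.
by rewrite /tpow size_takel // eqxx /=; case: ifP; rewrite ?mul1r ?mul0r.
Qed.

Lemma hcomp_emb (X : Type) d (f : ser K X) : hcomp d (emb f) = emb (hcomp d f).
Proof.
apply: functional_extensionality => w; rewrite /hcomp /emb.
case: eqP => [e|ne]; first by rewrite e; case: ifP.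
by case: eqP => // e; rewrite e; case: eqP.
Qed.

Lemma hcomp_mul T d (u v : ser K T) :
  hcomp d (ser_mul u v) =
  fun w => \sum_(i < d.+1) ser_mul (hcomp i u) (hcomp (d - i) v) w.
Proof.
apply: functional_extensionality => w; rewrite /ser_mul exchange_big /=.
transitivity (\sum_(l < (size w).+1)
   (if (size w == d) then u (take l w) * v (drop l w) else 0)).
  by rewrite /hcomp; case: eqP => // _; rewrite big1.
apply: eq_bigr => l _.
rewrite (@ord_single _ l (fun i => hcomp i u (take l w) * hcomp (d - i) v (drop l w))); last first.
  move=> i hi il; rewrite /hcomp size_takel; last by have := ltn_ord l; lia.
  by rewrite eq_sym (negbTE il) mul0r.
have hl := ltn_ord l.
rewrite /hcomp size_takel ?eqxx; last by lia.
rewrite size_drop; case: eqP => e.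
  have h1 : (l < d.+1)%N by lia.
  have h2 : (size w - l == d - l)%N by apply/eqP; lia.
  by rewrite h1 h2.
case: ifP => // ld; case: eqP => e2; last by rewrite mulr0.
exfalso; apply: e; move/eqP: e2; move: ld hl; set sw := size w; lia.
Qed.

Lemma hcomp_lin T d N (c : 'I_N -> K) (F : 'I_N -> ser K T) :
  hcomp d (fun w => \sum_(j < N) c j * F j w) = fun w => \sum_(j < N) c j * hcomp d (F j) w.
Proof.
apply: functional_extensionality => w; rewrite /hcomp; case: ifP => // _.
by rewrite big1 // => j _; rewrite mulr0.
Qed.

Lemma hcomp_sum T d N (F : 'I_N -> ser K T) :
  hcomp d (fun w => \sum_(j < N) F j w) = fun w => \sum_(j < N) hcomp d (F j) w.
Proof.
apply: functional_extensionality => w; rewrite /hcomp; case: ifP => // _.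
by rewrite big1.
Qed.

Lemma hcomp_sub T d (f g : ser K T) : hcomp d (ser_sub f g) = ser_sub (hcomp d f) (hcomp d g).
Proof.
apply: functional_extensionality => w; rewrite /hcomp /ser_sub; case: ifP => // _.
by rewrite subrr.
Qed.

Lemma hcomp_eta (X : Type) D k (f : ser K X) :
  hcomp D (ser_mul (tpow K k) (emb f)) =
  if (k <= D)%N then ser_mul (tpow K k) (emb (hcomp (D - k) f)) else @ser_zero K _.
Proof.
apply: functional_extensionality => w.
case: ifP => hk; last first.
  rewrite /hcomp tpow_mul /ser_zero; case: eqP => // e.
  by case: ifP => // /andP[h _]; exfalso; move: hk h; rewrite e => ->.
rewrite -hcomp_emb /hcomp !tpow_mul size_drop.
case: eqP => e.
  case: ifP => // /andP[h _]; by rewrite e eqxx.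
case: ifP => // /andP[h _]; case: eqP => // e2; exfalso; apply: e; lia.
Qed.

Definition ojoin (A : Type) N1 N2 (a : 'I_N1 -> A) (b : 'I_N2 -> A) (j : 'I_(N1 + N2)) : A :=
  match split j with inl x => a x | inr y => b y end.

Lemma ojoinL A N1 N2 (a : 'I_N1 -> A) (b : 'I_N2 -> A) x : ojoin a b (lshift N2 x) = a x.
Proof. by rewrite /ojoin (unsplitK (inl _ x)). Qed.

Lemma ojoinR A N1 N2 (a : 'I_N1 -> A) (b : 'I_N2 -> A) x : ojoin a b (rshift N1 x) = b x.
Proof. by rewrite /ojoin (unsplitK (inr _ x)). Qed.

Section Gen.
Variable X : finType.
Variable I : ser K X -> Prop.

Lemma gen_ext (g h : ser K (option X)) : (forall w, g w = h w) -> gen_ideal I g -> gen_ideal I h.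
Proof.
move=> E [N [u [f [v [H1 H2]]]]]; exists N, u, f, v; split => // w.
by rewrite -E; apply: H2.
Qed.

Lemma gen_zero (g : ser K (option X)) : (forall w, g w = 0) -> gen_ideal I g.
Proof.
move=> E; exists 0%N, (fun _ => @cst _ 0), (fun _ => @cst _ 0), (fun _ => @cst _ 0).
by split => [[]//|w]; rewrite big_ord0 E.
Qed.

Lemma gen_gen u f v : is_poly u -> I f -> is_poly v ->
  gen_ideal I (ser_mul (ser_mul u (emb f)) v).
Proof.
move=> hu hf hv; exists 1%N, (fun _ => u), (fun _ => f), (fun _ => v); split => // w.
by rewrite big_ord1.
Qed.

Lemma gen_add g h : gen_ideal I g -> gen_ideal I h -> gen_ideal I (ser_add g h).
Proof.
move=> [N1 [u1 [f1 [v1 [H1 E1]]]]] [N2 [u2 [f2 [v2 [H2 E2]]]]].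
exists (N1 + N2)%N, (ojoin u1 u2), (ojoin f1 f2), (ojoin v1 v2); split.
  by move=> j; rewrite /ojoin; case: (split j) => x; [apply: H1|apply: H2].
move=> w; rewrite /ser_add E1 E2 big_split_ord /=.
by congr (_ + _); apply: eq_bigr => j _; rewrite ?ojoinL ?ojoinR.
Qed.

Lemma gen_scale c g : gen_ideal I g -> gen_ideal I (fun w => c * g w).
Proof.
move=> [N [u [f [v [H E]]]]].
exists N, (fun j w => c * u j w), f, v; split.
  by move=> j; have [h1 h2 h3] := H j; split => //; apply: poly_scale.
move=> w; rewrite E mulr_sumr; apply: eq_bigr => j _.
by rewrite mul_scalel mul_scalel.
Qed.

Lemma gen_sum N (F : 'I_N -> ser K (option X)) :
  (forall j, gen_ideal I (F j)) -> gen_ideal I (fun w => \sum_(j < N) F j w).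
Proof.
elim: N F => [|N IH] F HF; first by apply: gen_zero => w; rewrite big_ord0.
apply: (@gen_ext (ser_add (fun w => \sum_(j < N) F (widen_ord (leqnSn N) j) w) (F ord_max))).
  by move=> w; rewrite /ser_add big_ord_recr.
apply: gen_add => //; exact: IH.
Qed.

Lemma gen_lin N (c : 'I_N -> K) (F : 'I_N -> ser K (option X)) :
  (forall j, gen_ideal I (F j)) -> gen_ideal I (fun w => \sum_(j < N) c j * F j w).
Proof. move=> H; apply: (gen_sum (F := fun j w => c j * F j w)) => j; exact: gen_scale. Qed.

Lemma gen_sub g h : gen_ideal I g -> gen_ideal I h -> gen_ideal I (ser_sub g h).
Proof.
move=> hg hh; apply: (@gen_ext (ser_add g (fun w => -1 * h w))).
  by move=> w; rewrite /ser_add /ser_sub mulN1r.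
by apply: gen_add => //; apply: gen_scale.
Qed.


Hypothesis HI : graded_ideal I.

Lemma I_poly f : I f -> is_poly f.
Proof. by case: HI => H _ _ _ _; apply: H. Qed.

Lemma gen_poly g : gen_ideal I g -> is_poly g.
Proof.
move=> [N [u [f [v [H E]]]]].
apply: (@poly_ext _ (fun w => \sum_(j < N) ser_mul (ser_mul (u j) (emb (f j))) (v j) w)).
  by move=> w; rewrite E.
apply: poly_sum => j; have [h1 h2 h3] := H j.
by apply: poly_mul => //; apply: poly_mul => //; apply: poly_emb; apply: I_poly.
Qed.

Lemma gen_hcomp d g : gen_ideal I g -> gen_ideal I (hcomp d g).
Proof.
move=> [N [u [f [v [H E]]]]].
have -> : g = (fun w => \sum_(j < N) ser_mul (ser_mul (u j) (emb (f j))) (v j) w).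
  exact: functional_extensionality.
rewrite hcomp_sum; apply: gen_sum => j; have [h1 h2 h3] := H j.
rewrite hcomp_mul; apply: gen_sum => i.
rewrite hcomp_mul mul_suml; apply: gen_sum => l.
rewrite hcomp_emb; apply: gen_gen; try exact: poly_hcomp.
by case: HI => _ _ _ _; apply.
Qed.

Lemma I_ser_zero g : (forall w, g w = 0) -> I g.
Proof.
move=> E; have -> : g = @ser_zero K X by apply: functional_extensionality.
by case: HI.
Qed.

Lemma I_add f g : I f -> I g -> I (ser_add f g).
Proof. by case: HI => _ _ H _ _; apply: H. Qed.

Lemma I_scale c f : I f -> I (fun w => c * f w).
Proof.
move=> hf; rewrite -mul_cst; case: HI => _ _ _ H _.
by have [] := H f (@cst _ c) hf (poly_cst _ _).
Qed.

Lemma I_sum N (F : 'I_N -> ser K X) :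
  (forall j, I (F j)) -> I (fun w => \sum_(j < N) F j w).
Proof.
elim: N F => [|N IH] F HF; first by apply: I_ser_zero => w; rewrite big_ord0.
have -> : (fun w => \sum_(j < N.+1) F j w) =
   ser_add (fun w => \sum_(j < N) F (widen_ord (leqnSn N) j) w) (F ord_max).
  by apply: functional_extensionality => w; rewrite /ser_add big_ord_recr.
apply: I_add => //; exact: IH.
Qed.

Lemma I_sub f g : I f -> I g -> I (ser_sub f g).
Proof.
move=> hf hg; have -> : ser_sub f g = ser_add f (fun w => -1 * g w).
  by apply: functional_extensionality => w; rewrite /ser_add /ser_sub mulN1r.
by apply: I_add => //; apply: I_scale.
Qed.

Lemma I_mulr f u : I f -> is_poly u -> I (ser_mul f u).
Proof. by move=> hf hu; case: HI => _ _ _ H _; have [] := H f u hf hu. Qed.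

Lemma I_mull f u : I f -> is_poly u -> I (ser_mul u f).
Proof. by move=> hf hu; case: HI => _ _ _ H _; have [] := H f u hf hu. Qed.

Lemma psi_gen g : gen_ideal I g -> I (psi g).
Proof.
move=> [N [u [f [v [H E]]]]].
have -> : g = (fun w => \sum_(j < N) ser_mul (ser_mul (u j) (emb (f j))) (v j) w).
  exact: functional_extensionality.
have Hp : forall j, is_poly (ser_mul (ser_mul (u j) (emb (f j))) (v j)).
  move=> j; have [h1 h2 h3] := H j.
  by apply: poly_mul => //; apply: poly_mul => //; apply: poly_emb; apply: I_poly.
have -> : (fun w => \sum_(j < N) ser_mul (ser_mul (u j) (emb (f j))) (v j) w) =
   (fun w => \sum_(j < N) 1 * ser_mul (ser_mul (u j) (emb (f j))) (v j) w).
  by apply: functional_extensionality => w; apply: eq_bigr => j _; rewrite mul1r.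
rewrite psi_lin //.
have -> : (fun w => \sum_(j < N) 1 * psi (ser_mul (ser_mul (u j) (emb (f j))) (v j)) w) =
   (fun w => \sum_(j < N) psi (ser_mul (ser_mul (u j) (emb (f j))) (v j)) w).
  by apply: functional_extensionality => w; apply: eq_bigr => j _; rewrite mul1r.
apply: I_sum => j; have [h1 h2 h3] := H j.
have hf := I_poly h2.
rewrite psi_mul //; last by apply: poly_mul => //; apply: poly_emb.
rewrite psi_mul //; last by apply: poly_emb.
rewrite psi_emb //; apply: I_mulr; last exact: poly_psi.
by apply: I_mull => //; exact: poly_psi.
Qed.

End Gen.
End Ser.

Lemma eta_thom (K : fieldType) (X : Type) r (delta delta' : 'I_r -> nat) d (m : 'I_r -> ser K X) :
  (forall i, (delta' i <= delta i)%N) -> thom delta d m ->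
  thom delta' d (Defs.eta (fun i => (delta i - delta' i)%N) m).
Proof.
move=> Hdd Hm i w hw; rewrite /Defs.eta tpow_mul; case: ifP => // /andP[hk _].
rewrite /emb; case: eqP => // e; apply: Hm; rewrite e size_drop.
have := Hdd i; move: hk hw; set sw := size w; lia.
Qed.

Lemma tcomp_thom (K : fieldType) (X : Type) r (deg : 'I_r -> nat) d (m : 'I_r -> ser K X) :
  thom deg d (tcomp deg d m).
Proof.
move=> i w hw; rewrite /tcomp; case: ifP => h //; rewrite /hcomp; case: eqP => // e.
exfalso; move/eqP: hw; apply; rewrite e; lia.
Qed.

Unset Implicit Arguments.

Theorem mainTheorem1 (K : fieldType) (n r : nat)
  (I : ser K 'I_n -> Prop) (HI : graded_ideal I)
  (delta delta' : 'I_r -> nat)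
  (Mt : ('I_r -> ser K 'I_n) -> Prop) (HM : graded_submodule I delta Mt)
  (Hdd : forall i, (delta' i <= delta i)%N) :
  let k := fun i => (delta i - delta' i)%N in
  (forall g, etaM I k Mt g <-> Mbar' I k Mt g) /\
  (forall d N : nat,
     indep_family I delta Mt d N <->
     indep_family (gen_ideal I) delta' (Mbar' I k Mt) d N).
Proof.
move=> k.
have [[Mpoly M0] Madd Mmul Msat Mcomp] := HM.
have Peta : forall m : 'I_r -> ser K 'I_n, (forall i, is_poly (m i)) -> forall i, is_poly (Defs.eta k m i).
  by move=> m hm i; apply: poly_mul; [exact: poly_tpow | apply: poly_emb].
have psi_eta : forall (m : 'I_r -> ser K 'I_n) i, is_poly (m i) -> psi (Defs.eta k m i) = m i.
  move=> m i hm; rewrite /Defs.eta psi_mul ?psi_tpow ?psi_emb ?mul_1l //.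
    exact: poly_tpow.
  exact: poly_emb.
have Mlin : forall N (F : 'I_N -> 'I_r -> ser K 'I_n), (forall j, Mt (F j)) ->
    Mt (fun i w => \sum_(j < N) F j i w).
  elim=> [|N IH] F HF.
    have -> : (fun (i : 'I_r) w => \sum_(j < 0) F j i w) = (fun _ => @ser_zero K _) => //.
    by apply: functional_extensionality => i; apply: functional_extensionality => w; rewrite big_ord0.
  have -> : (fun i w => \sum_(j < N.+1) F j i w) =
     (fun i => ser_add (fun w => \sum_(j < N) F (widen_ord (leqnSn N) j) i w) (F ord_max i)).
    apply: functional_extensionality => i; apply: functional_extensionality => w.
    by rewrite /ser_add big_ord_recr.
  by apply: Madd => //; apply: (IH (fun j => F (widen_ord (leqnSn N) j))).
have part1 : forall g, etaM I k Mt g <-> Mbar' I k Mt g.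
  move=> g; split.
    move=> [gp [m [hm he]]]; split; last by exists m; split => //; apply: Mpoly.
    split => //; exists 1%N, (fun _ => m), (fun _ => @cst K _ 1); split.
      by move=> j; split => //; exact: poly_cst.
    move=> i; apply: gen_ext (he i) => w; by rewrite /ser_sub big_ord1 mul_1r.
  move=> [[gp [N [ms [us [Hmu HS]]]]] [a [ap Ha]]]; split => //; exists a; split => //.
  pose m0 := fun i w => \sum_(j < N) ser_mul (ms j i) (psi (us j)) w.
  have Mm0 : Mt m0.
    apply: (Mlin N (fun j i => ser_mul (ms j i) (psi (us j)))) => j.
    by apply: Mmul; [exact: (Hmu j).1 | exact: poly_psi].
  apply: (Msat _ _ Mm0 ap) => i.
  have Pms : forall j, is_poly (Defs.eta k (ms j) i).
    by move=> j; apply: Peta => i'; apply: (Mpoly _ (Hmu j).1).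
  have PS : forall j, is_poly (ser_mul (Defs.eta k (ms j) i) (us j)).
    by move=> j; apply: poly_mul => //; exact: (Hmu j).2.
  have e1 := psi_gen HI (HS i).
  have e2 := psi_gen HI (Ha i).
  rewrite psi_sub // in e1; last exact: poly_sum.
  rewrite psi_sub // in e2; last exact: Peta.
  rewrite psi_sum // in e1.
  have E : (fun w => \sum_(j < N) psi (ser_mul (Defs.eta k (ms j) i) (us j)) w) = m0 i.
    apply: functional_extensionality => w; apply: eq_bigr => j _.
    rewrite psi_mul //; last exact: (Hmu j).2.
    by rewrite psi_eta //; apply: (Mpoly _ (Hmu j).1).
  rewrite E in e1; rewrite psi_eta // in e2.
  have -> : ser_sub (m0 i) (a i) = ser_sub (ser_sub (psi (g i)) (a i)) (ser_sub (psi (g i)) (m0 i)).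
    by apply: functional_extensionality => w; rewrite /ser_sub; ring.
  exact: I_sub.
split => // d N; split.
  move=> [ms [Hms Hind]]; exists (fun j => Defs.eta k (ms j)); split.
    move=> j; have [hm ht] := Hms j; split; last exact: eta_thom.
    apply/part1; split; first by apply: Peta; apply: Mpoly.
    exists (ms j); split => // i; apply: gen_zero => w; by rewrite /ser_sub subrr.
  move=> c Hc; apply: Hind => i.
  have := psi_gen HI (Hc i); rewrite psi_lin; last first.
    by move=> j; apply: Peta; apply: Mpoly; exact: (Hms j).1.
  congr I; apply: functional_extensionality => w; apply: eq_bigr => j _.
  by rewrite psi_eta //; apply: Mpoly; exact: (Hms j).1.
move=> [ms' [Hms' Hind']].
have ex : forall j, exists a, Mt a /\ tequiv (gen_ideal I) (ms' j) (Defs.eta k a).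
  by move=> j; have [_ ] := (part1 (ms' j)).2 (Hms' j).1.
pose a j := proj1_sig (constructive_indefinite_description _ (ex j)).
have Ha : forall j, Mt (a j) /\ tequiv (gen_ideal I) (ms' j) (Defs.eta k (a j)).
  by move=> j; rewrite /a; case: constructive_indefinite_description.
pose m j := tcomp delta d (a j).
exists m; split.
  by move=> j; split; [apply: Mcomp; exact: (Ha j).1 | exact: tcomp_thom].
move=> c Hc; apply: Hind' => i.
case: (leqP (delta' i) d) => hdi; last first.
  apply: gen_zero => w; rewrite big1 // => j _; rewrite (Hms' j).2 ?mulr0 //.
  by apply/eqP; move: hdi; set sw := size w; lia.
pose D := (d - delta' i)%N.
have Z : gen_ideal I (fun w => \sum_(j < N) c j * ser_sub (ms' j i) (Defs.eta k (a j) i) w).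
  by apply: gen_lin => j; exact: ((Ha j).2 i).
have HZ := gen_hcomp HI D Z.
rewrite hcomp_lin in HZ.
have Hj : forall j w, hcomp D (ser_sub (ms' j i) (Defs.eta k (a j) i)) w = ms' j i w - Defs.eta k (m j) i w.
  move=> j w; rewrite hcomp_sub /ser_sub; congr (_ - _).
    rewrite /hcomp; case: eqP => // e; rewrite (Hms' j).2 //.
    by apply/eqP; move: e hdi; rewrite /D; set sw := size w; lia.
  rewrite /Defs.eta hcomp_eta /m /tcomp /k.
  case: (leqP (delta i) d) => hd.
    have -> : (delta i - delta' i <= D)%N by rewrite /D; lia.
    by have -> : (D - (delta i - delta' i) = d - delta i)%N by rewrite /D; have := Hdd i; lia.
  have -> : (delta i - delta' i <= D)%N = false by apply/negbTE; rewrite /D -ltnNge; lia.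
  rewrite tpow_mul /ser_zero; case: ifP => // _; rewrite /emb; by case: ifP.
have HY : gen_ideal I (ser_mul (ser_mul (tpow K (k i)) (emb (fun w => \sum_(j < N) c j * m j i w))) (@cst K _ 1)).
  apply: gen_gen => //; [exact: poly_tpow | exact: poly_cst].
apply: gen_ext (gen_add HZ HY) => w.
rewrite /ser_add mul_1r tpow_mul.
under eq_bigr do rewrite Hj.
have -> : (if (k i <= size w)%N && all (fun o : option 'I_n => ~~ isSome o) (take (k i) w)
   then emb (fun w0 : seq 'I_n => \sum_(j < N) c j * m j i w0) (drop (k i) w) else 0)
   = \sum_(j < N) c j * Defs.eta k (m j) i w.
  under [RHS]eq_bigr do rewrite /Defs.eta tpow_mul.
  case: ifP => _; last by rewrite big1 // => j _; rewrite mulr0.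
  rewrite /emb; case: ifP => _ //; by rewrite big1 // => j _; rewrite mulr0.
rewrite -big_split /=; apply: eq_bigr => j _; ring.
Qed.
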